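(* Let $0<q<1$. Define the $q$-Hermite polynomials $H_{n,q}(x)$ by \[ H_q(t)\,e_q(tx)=\sum_{n=0}^\infty H_{n,q}(x)\frac{t^n}{[n]_q!},\qquad H_q(t)=\sum_{n=0}^\infty(-1)^nq^{n(n-1)}\frac{t^{2n}}{[2n]_q!!}. \] Then for every integer $n\ge2$, \[ H_{n,q}(qx)=xq^nH_{n-1,q}(x)-[n-1]_q\,q^{n-2}H_{n-2,q}(x). \]
   Context: $[n]_q=\frac{1-q^n}{1-q}$, $[0]_q!=1$, $[n]_q!=[n]_q\cdots[1]_q$, $[0]_q!!=1$, $[2n]_q!!=[2n]_q[2n-2]_q\cdots[2]_q$, and $e_q(t)=\sum_{n\ge0}\frac{t^n}{[n]_q!}$. *)

(* Defs.v *)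
From mathcomp Require Import all_boot all_order all_algebra.
Set Implicit Arguments. Unset Strict Implicit. Unset Printing Implicit Defensive.
Import Order.TTheory GRing.Theory Num.Theory.
Local Open Scope ring_scope.

Section QDefs.
Variable R : realFieldType.

Definition qint (q : R) (n : nat) : R := (1 - q ^+ n) / (1 - q).

Definition qfact (q : R) (n : nat) : R := \prod_(1 <= i < n.+1) qint q i.

(* [2n]_q!! = [2n]_q [2n-2]_q ... [2]_q, [0]_q!! = 1 ; argument is n *)
Definition qdfact2 (q : R) (n : nat) : R := \prod_(1 <= i < n.+1) qint q (2 * i).

(* coefficient of t^m in H_q(t) = sum_n (-1)^n q^{n(n-1)} t^{2n} / [2n]_q!! *)
Definition Hq_coef (q : R) (m : nat) : R :=
  if odd m then 0
  else (-1) ^+ (m./2) * q ^+ (m./2 * (m./2).-1) / qdfact2 q (m./2).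

(* coefficient of t^m in e_q(t x) = sum_m (t x)^m / [m]_q! *)
Definition eq_coef (q x : R) (m : nat) : R := x ^+ m / qfact q m.

(* H_{n,q}(x) : [n]_q! times the coefficient of t^n in the (Cauchy) product
   H_q(t) e_q(t x) *)
Definition qHermite (q : R) (n : nat) (x : R) : R :=
  qfact q n * \sum_(i < n.+1) Hq_coef q i * eq_coef q x (n - i).

End QDefs.

(* Main.v *)
Require Import Defs.
From mathcomp Require Import all_boot all_order all_algebra.
From mathcomp Require Import ring lra zify.
Import Order.TTheory GRing.Theory Num.Theory.
Local Open Scope ring_scope.

Section H.
Variable R : realFieldType.
Variable q : R.
Hypothesis hq0 : 0 < q.
Hypothesis hq1 : q < 1.

Lemma oneBq : 1 - q != 0.
Proof. by rewrite subr_eq0 eq_sym (lt_eqF hq1). Qed.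

Lemma qint_neq0 n : (0 < n)%N -> qint q n != 0.
Proof.
move=> hn; rewrite /qint mulf_neq0 ?invr_eq0 ?oneBq //.
rewrite subr_eq0 eq_sym; apply/negP => /eqP E.
have := exprn_ilt1 n (ltW hq0) hq1; rewrite -E ltxx.
by case: n hn {E}.
Qed.

Lemma qint0 : qint q 0 = 0.
Proof. by rewrite /qint expr0 subrr mul0r. Qed.

Lemma qintD a b : qint q (a + b) = qint q a + q ^+ a * qint q b.
Proof.
rewrite /qint exprD.
have h := oneBq. field; exact h.
Qed.

Lemma qfactS n : qfact q n.+1 = qfact q n * qint q n.+1.
Proof. by rewrite /qfact big_nat_recr. Qed.

Lemma qfact0 : qfact q 0 = 1.
Proof. by rewrite /qfact big_geq. Qed.

Lemma qfact_neq0 n : qfact q n != 0.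
Proof.
elim: n => [|n IH]; first by rewrite qfact0 oner_eq0.
by rewrite qfactS mulf_neq0 // qint_neq0.
Qed.

Lemma qdfact2S n : qdfact2 q n.+1 = qdfact2 q n * qint q (2 * n.+1).
Proof. by rewrite /qdfact2 big_nat_recr. Qed.

Lemma qdfact2_neq0 n : qdfact2 q n != 0.
Proof.
elim: n => [|n IH]; first by rewrite /qdfact2 big_geq // oner_eq0.
by rewrite qdfact2S mulf_neq0 // qint_neq0.
Qed.

Lemma Hq0 : Hq_coef q 0 = 1.
Proof. by rewrite /Hq_coef /= /qdfact2 big_geq // invr1 mulr1 muln0 !expr0 mul1r. Qed.

Lemma Hq1 : Hq_coef q 1 = 0.
Proof. by []. Qed.

Lemma HqSS i : Hq_coef q i.+2 = - q ^+ i * Hq_coef q i / qint q i.+2.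
Proof.
rewrite /Hq_coef /= negbK; case: ifP => ho; first by rewrite !mulr0 mul0r.
have [k E] : exists k, i = k.*2.
  by exists i./2; rewrite -[LHS]odd_double_half ho.
rewrite E !doubleK.
have -> : (k.+1 * k = k * k.-1 + k.*2)%N by case: k {E} => //= k; lia.
rewrite qdfact2S exprS exprD -muln2 mulnC.
have h1 := qdfact2_neq0 k. have h2 := qint_neq0 (2 * k.+1) isT.
have -> : (k * 2).+2 = (2 * k.+1)%N by lia.
field. by rewrite h1 h2.
Qed.

Lemma term m x i : (i <= m.+2)%N ->
 qfact q m.+2 * (Hq_coef q i * eq_coef q (q*x) (m.+2 - i)) =
 (if (i < m.+2)%N then x * q^+m.+2 * (qfact q m.+1 * (Hq_coef q i * eq_coef q x (m.+1 - i))) else 0)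
 - (if (2 <= i)%N then qint q m.+1 * q^+m * (qfact q m * (Hq_coef q (i-2) * eq_coef q x (m - (i-2)))) else 0).
Proof.
have hf := qfact_neq0. have hi := qint_neq0. have hb := oneBq.
case: i => [|[|j]] hi2 /=.
- rewrite !subn0 Hq0 /eq_coef !qfactS exprMn !exprS subr0.
  have h1 := hf m. have h2 := hi m.+1 isT. have h3 := hi m.+2 isT.
  field. by rewrite h1 h2 h3.
- by rewrite Hq1 !mul0r !mulr0 subr0.
- have -> : (j.+2 - 2 = j)%N by lia.
  case: ifP => hlt.
  + have [s E] : exists s, m = (j + s.+1)%N by exists (m - j.+1)%N; lia.
    rewrite E.
    have -> : ((j + s.+1)%N.+2 - j.+2 = s.+1)%N by lia.
    have -> : ((j + s.+1)%N.+1 - j.+2 = s)%N by lia.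
    have -> : ((j + s.+1) - j = s.+1)%N by lia.
    rewrite HqSS /eq_coef !qfactS.
    have -> : qint q (j + s.+1)%N.+2 = qint q (j.+2 + s.+1)%N by congr qint; lia.
    rewrite qintD.
    have e1 : q ^+ (j + s.+1)%N.+2 = q^+j * q^+s * q^+3 by rewrite -!exprD; congr (_ ^+ _); lia.
    have e2 : q ^+ (j + s.+1)%N = q^+j * q^+s * q^+1 by rewrite -!exprD; congr (_ ^+ _); lia.
    have e3 : q ^+ j.+2 = q^+j * q^+2 by rewrite -!exprD; congr (_ ^+ _); lia.
    rewrite e1 e2 e3 exprMn !(exprS _ s).
    have h1 := hf s. have h2 := hi s.+1 isT. have h3 := hi j.+2 isT.
    have h4 := hf (j + s.+1)%N. have h5 := hi (j + s.+1)%N.+1 isT.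
    have h6 : qint q j.+2 + q ^+ j * q ^+ 2 * qint q s.+1 != 0.
      by rewrite -e3 -qintD hi.
    field. by rewrite h1 h2 h3.
  + have E : j = m by lia.
    rewrite E !subnn /eq_coef HqSS !qfactS qfact0 !expr0.
    have h1 := hf m. have h2 := hi m.+1 isT. have h3 := hi m.+2 isT.
    field. by [].
Qed.

End H.

Lemma qH_nat (R : realFieldType) (q : R) n y : qHermite q n y =
  \sum_(0 <= i < n.+1) qfact q n * (Hq_coef q i * eq_coef q y (n - i)).
Proof. by rewrite /qHermite mulr_sumr big_mkord. Qed.

Theorem theorem10 (R : realFieldType) (q : R) (hq0 : 0 < q) (hq1 : q < 1)
  (n : nat) (hn : (2 <= n)%N) (x : R) :
  qHermite q n (q * x) =
    x * q ^+ n * qHermite q n.-1 x - qint q n.-1 * q ^+ (n - 2) * qHermite q (n - 2) x.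
Proof.
case: n hn => [|[|m]] // _.
rewrite !subSS subn0 /= !qH_nat !mulr_sumr.
under eq_big_nat => i /andP[_ hi] do rewrite (@term _ _ hq0 hq1 m x i hi).
rewrite sumrB; congr (_ - _).
  rewrite big_nat_recr //= ltnn addr0.
  by apply: eq_big_nat => i /andP[_ ->].
rewrite big_nat_recl // big_nat_recl //= add0r.
rewrite add0r; apply: eq_big_nat => i _.
by have -> : (i.+2 - 2 = i)%N by lia.
Qed.
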